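(* Let $(\alpha,\beta,\gamma,\delta)\in\mathbb{C}^4$ with $\gamma\neq0$ or $\delta\neq0$. The quartic surface $\mathrm{Q}(\alpha,\beta,\gamma,\delta)\subset\mathbb{P}^3(x,y,z,w)$, $y^2zw-4x^3z+3\alpha xzw^2+\beta zw^3+\gamma xz^2w-\tfrac12(\delta z^2w^2+w^4)=0$, has a singular point other than $[0,1,0,0]$ and $[0,0,1,0]$ if and only if $\mathcal{D}_4(\alpha,\beta,\gamma,\delta)=0$, where $$\begin{aligned}\mathcal{D}_4=\;&-2^53^6\alpha^6\beta\gamma^3+2^63^6\alpha^3\beta^3\gamma^3-2^53^6\beta^5\gamma^3-2^43^5\alpha^5\gamma^4+2^43^55^2\alpha^2\beta^2\gamma^4+2\cdot3^35^4\alpha\beta\gamma^5+5^5\gamma^6\\&-2^43^7\alpha^7\gamma^2\delta+2^53^7\alpha^4\beta^2\gamma^2\delta-2^43^7\alpha\beta^4\gamma^2\delta+2^33^5\cdot5\cdot19\,\alpha^3\beta\gamma^3\delta+2^33^55^2\beta^3\gamma^3\delta+3^35^3\cdot11\,\alpha^2\gamma^4\delta\\&+2^33^5\cdot37\,\alpha^4\gamma^2\delta^2+2^33^5\cdot5\cdot7\,\alpha\beta^2\gamma^2\delta^2-2^33^35^3\beta\gamma^3\delta^2+2^43^6\alpha^6\delta^3-2^53^6\alpha^3\beta^2\delta^3+2^43^6\beta^4\delta^3\\&-2^63^6\alpha^2\beta\gamma\delta^3-2^33^55^2\alpha\gamma^2\delta^3-2^53^6\alpha^3\delta^4-2^53^6\beta^2\delta^4+2^43^6\delta^5.\end{aligned}$$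 *)

(* Defs.v *)
(* The base field C is an arbitrary numClosedFieldType
   (algebraically closed, characteristic 0, with conjugation); the complex
   numbers are the intended instance. *)
From HB Require Import structures.
From mathcomp Require Import all_boot all_order all_algebra.
Set Implicit Arguments. Unset Strict Implicit. Unset Printing Implicit Defensive.
Import Order.TTheory GRing.Theory Num.Theory.
Local Open Scope ring_scope.

(* The quartic form Q(a,b,c,d) evaluated at polynomial arguments
   (used to take partial derivatives by substituting 'X in one coordinate):
   y^2 z w - 4 x^3 z + 3a x z w^2 + b z w^3 + c x z^2 w - 1/2 (d z^2 w^2 + w^4). *)
Definition quarticP (C : fieldType) (a b c d : C) (x y z w : {poly C}) : {poly C} :=
  y ^+ 2 * z * w - 4%:R%:P * x ^+ 3 * z + (3%:R * a)%:P * x * z * w ^+ 2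
  + b%:P * z * w ^+ 3 + c%:P * x * z ^+ 2 * w
  - (2%:R^-1)%:P * (d%:P * z ^+ 2 * w ^+ 2 + w ^+ 4).

Definition quartic (C : fieldType) (a b c d x y z w : C) : C :=
  (quarticP a b c d 'X y%:P z%:P w%:P).[x].

Definition dQx (C : fieldType) (a b c d x y z w : C) : C :=
  (quarticP a b c d 'X y%:P z%:P w%:P)^`().[x].
Definition dQy (C : fieldType) (a b c d x y z w : C) : C :=
  (quarticP a b c d x%:P 'X z%:P w%:P)^`().[y].
Definition dQz (C : fieldType) (a b c d x y z w : C) : C :=
  (quarticP a b c d x%:P y%:P 'X w%:P)^`().[z].
Definition dQw (C : fieldType) (a b c d x y z w : C) : C :=
  (quarticP a b c d x%:P y%:P z%:P 'X)^`().[w].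

Definition singular_rep (C : fieldType) (a b c d x y z w : C) : Prop :=
  ~ (x = 0 /\ y = 0 /\ z = 0 /\ w = 0) /\
  quartic a b c d x y z w = 0 /\
  dQx a b c d x y z w = 0 /\ dQy a b c d x y z w = 0 /\
  dQz a b c d x y z w = 0 /\ dQw a b c d x y z w = 0.

(* [x,y,z,w] = [0,1,0,0] in P^3 iff x = z = w = 0 (for a nonzero vector) *)
Definition is_P0100 (C : fieldType) (x y z w : C) : Prop :=
  x = 0 /\ z = 0 /\ w = 0.
(* [x,y,z,w] = [0,0,1,0] in P^3 iff x = y = w = 0 *)
Definition is_P0010 (C : fieldType) (x y z w : C) : Prop :=
  x = 0 /\ y = 0 /\ w = 0.

Definition D4 (C : fieldType) (a b c d : C) : C :=
  - (2^5 * 3^6)%N%:R * a^+6 * b * c^+3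
  + (2^6 * 3^6)%N%:R * a^+3 * b^+3 * c^+3
  - (2^5 * 3^6)%N%:R * b^+5 * c^+3
  - (2^4 * 3^5)%N%:R * a^+5 * c^+4
  + (2^4 * 3^5 * 5^2)%N%:R * a^+2 * b^+2 * c^+4
  + (2 * 3^3 * 5^4)%N%:R * a * b * c^+5
  + (5^5)%N%:R * c^+6
  - (2^4 * 3^7)%N%:R * a^+7 * c^+2 * d
  + (2^5 * 3^7)%N%:R * a^+4 * b^+2 * c^+2 * d
  - (2^4 * 3^7)%N%:R * a * b^+4 * c^+2 * d
  + (2^3 * 3^5 * 5 * 19)%N%:R * a^+3 * b * c^+3 * d
  + (2^3 * 3^5 * 5^2)%N%:R * b^+3 * c^+3 * d
  + (3^3 * 5^3 * 11)%N%:R * a^+2 * c^+4 * d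
  + (2^3 * 3^5 * 37)%N%:R * a^+4 * c^+2 * d^+2
  + (2^3 * 3^5 * 5 * 7)%N%:R * a * b^+2 * c^+2 * d^+2
  - (2^3 * 3^3 * 5^3)%N%:R * b * c^+3 * d^+2
  + (2^4 * 3^6)%N%:R * a^+6 * d^+3
  - (2^5 * 3^6)%N%:R * a^+3 * b^+2 * d^+3
  + (2^4 * 3^6)%N%:R * b^+4 * d^+3
  - (2^6 * 3^6)%N%:R * a^+2 * b * c * d^+3
  - (2^3 * 3^5 * 5^2)%N%:R * a * c^+2 * d^+3
  - (2^5 * 3^6)%N%:R * a^+3 * d^+4
  - (2^5 * 3^6)%N%:R * b^+2 * d^+4
  + (2^4 * 3^6)%N%:R * d^+5.

(* Main.v *)
From Stdlib Require Import Ring ZArith BinNat Lia.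
Require Import Defs.
From HB Require Import structures.
From mathcomp Require Import all_boot all_order all_algebra.
Import Order.TTheory GRing.Theory Num.Theory.
Local Open Scope ring_scope.

Section S.
Variable R : comRingType.

Definition phiZ (z : Z) : R :=
  match z with Z0 => 0 | Zpos p => (Pos.to_nat p)%:R | Zneg p => - (Pos.to_nat p)%:R end.

Lemma R_rth : ring_theory (0 : R) 1 +%R *%R (fun x y => x - y) -%R eq.
Proof.
split=> //; [exact: add0r|exact: addrC|exact: addrA|exact: mul1r|exact: mulrC|exact: mulrA|exact: mulrDl|exact: subrr].
Qed.

Lemma phiZ_nat (n : nat) : phiZ (Z.of_nat n) = n%:R.
Proof. case: n => //= n; by rewrite SuccNat2Pos.id_succ. Qed.

Lemma phiZ_split z : phiZ z = (Z.to_nat z)%:R - (Z.to_nat (- z))%:R.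
Proof.
case: z => [|p|p] /=; rewrite ?subr0 ?sub0r //.
Qed.

Lemma natZ_eq (m n : nat) : m = n -> (m%:R : R) = n%:R. Proof. by move->. Qed.

Lemma natr_sub_eq (p1 n1 p2 n2 : nat) : (p1 + n2 = p2 + n1)%N ->
  (p1%:R - n1%:R : R) = p2%:R - n2%:R.
Proof.
move=> h; apply/eqP; rewrite subr_eq addrAC eq_sym subr_eq -!natrD h addnC //.
Qed.

Lemma natr_sub_add (p1 n1 p2 n2 : nat) :
  (p1%:R - n1%:R : R) + (p2%:R - n2%:R) = (p1 + p2)%:R - (n1 + n2)%:R.
Proof. by rewrite !natrD opprD addrACA. Qed.

Lemma natr_sub_mul (p1 n1 p2 n2 : nat) :
  (p1%:R - n1%:R : R) * (p2%:R - n2%:R) = (p1 * p2 + n1 * n2)%:R - (p1 * n2 + n1 * p2)%:R.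
Proof.
rewrite mulrBl !mulrBr -!natrM !natrD opprB opprD.
rewrite addrAC -!addrA; congr (_ + _); congr (_ + _); exact: addrC.
Qed.

Lemma R_morph : ring_morph (0:R) 1 +%R *%R (fun x y => x - y) -%R eq
   Z0 (Zpos xH) Z.add Z.mul Z.sub Z.opp Z.eqb phiZ.
Proof.
split=> //.
- move=> x y; rewrite !phiZ_split natr_sub_add; apply: natr_sub_eq; rewrite -!plusE; lia.
- move=> x y; rewrite !phiZ_split opprB natr_sub_add; apply: natr_sub_eq; rewrite -!plusE; lia.
- move=> x y; rewrite !phiZ_split natr_sub_mul; apply: natr_sub_eq; rewrite -!plusE -!multE; nia.
- move=> x; rewrite !phiZ_split opprB; congr (_ - _); by rewrite Z.opp_involutive.
- by move=> x y /Z.eqb_eq ->.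
Qed.

Lemma pow_pos_expr (x : R) p : pow_pos *%R x p = x ^+ Pos.to_nat p.
Proof.
elim: p => [p IH|p IH|] /=.
- by rewrite Pos2Nat.inj_xI IH exprS multE mul2n -addnn exprD.
- by rewrite Pos2Nat.inj_xO IH multE mul2n -addnn exprD.
- by rewrite expr1.
Qed.

Lemma R_pow : power_theory (1:R) *%R eq N.to_nat (fun x n => x ^+ n).
Proof.
split=> x n; case: n => //= p; by rewrite pow_pos_expr.
Qed.
End S.
Section Prime.
Variable C : numClosedFieldType.
Definition radd (x y : C) : C := x + y.
Definition rmul (x y : C) : C := x * y.
Definition ropp (x : C) : C := - x.
Definition rexp (x : C) (n : nat) : C := x ^+ n.
Definition rnat (n : nat) : C := n%:R.
Definition rzero : C := 0.
Definition rinv (x : C) : C := x^-1.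
Definition rone : C := 1.
Lemma req_fix (x y : C) : x = y -> x = y. Proof. by []. Qed.
Lemma rrth : ring_theory rzero rone radd rmul (fun x y => radd x (ropp y)) ropp (@eq C).
Proof. exact: R_rth. Qed.
Lemma rrmorph : ring_morph rzero rone radd rmul (fun x y => radd x (ropp y)) ropp (@eq C)
   Z0 (Zpos xH) Z.add Z.mul Z.sub Z.opp Z.eqb (phiZ C).
Proof. exact: R_morph. Qed.
Lemma rrpow : power_theory rone rmul (@eq C) N.to_nat rexp.
Proof. exact: R_pow. Qed.
End Prime.

Ltac rcst t :=
  match t with
  | rzero _ => constr:(Z0)
  | rone _ => constr:(Zpos xH)
  | rnat _ ?n =>
      let z := eval vm_compute in (Z.of_nat n) in z
  | _ => constr:(InitialRing.NotConstant)
  end.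
Ltac rpw t := let m := eval vm_compute in (N.of_nat t) in m.

Ltac tr C t :=
  lazymatch t with
  | @Algebra.add _ ?x ?y => let x' := tr C x in let y' := tr C y in constr:(@radd C x' y')
  | @Algebra.opp _ ?x => let x' := tr C x in constr:(@ropp C x')
  | @GRing.mul _ ?x ?y => let x' := tr C x in let y' := tr C y in constr:(@rmul C x' y')
  | @GRing.exp _ ?x ?n => let x' := tr C x in constr:(@rexp C x' n)
  | @Algebra.natmul _ (GRing.one _) ?n => constr:(@rnat C n)
  | @Algebra.natmul _ ?x ?n => fail 100 "natmul with non-one base"
  | @GRing.inv _ ?x => let x' := tr C x in constr:(@rinv C x')
  | @Algebra.zero _ => constr:(@rzero C)
  | @GRing.one _ => constr:(@rone C)
  | _ => t
  end.

Ltac rprep C := lazymatch goal with |- ?L = ?R =>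
  let L' := tr C L in let R' := tr C R in change (@eq (Num.ClosedField.sort C) L' R') end.

Section Main.
Variable C : numClosedFieldType.
Add Ring Cring : (rrth C) (morphism (rrmorph C), constants [rcst], power_tac (rrpow C) [rpw]).
Ltac cring := rprep C; ring.
Ltac cg := lazymatch goal with
  | |- Algebra.add _ _ = _ => congr (_ + _); cg
  | |- Algebra.opp _ = _ => congr (- _); cg
  | |- GRing.mul _ _ = _ => congr (_ * _); cg
  | |- Algebra.natmul _ _ = _ => rewrite ?natrM ?natrX; cring
  | |- _ => reflexivity
  end.

Lemma test1 (x y : C) : (x + y) ^+ 2 - 2%:R * x * y = x ^+ 2 + 2%:R * y * y - y ^+ 2.
Proof. cring. Qed.

Lemma dQx_E (a b c d x y z w : C) :
  dQx a b c d x y z w = - (12%:R * x ^+ 2 * z) + 3%:R * a * z * w ^+ 2 + c * z ^+ 2 * w.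
Proof. rewrite /dQx /quarticP !derivE !hornerE /=. cring. Qed.
Lemma dQy_E (a b c d x y z w : C) :
  dQy a b c d x y z w = 2%:R * y * z * w.
Proof. rewrite /dQy /quarticP !derivE !hornerE /=. cring. Qed.
Lemma dQz_E (a b c d x y z w : C) :
  dQz a b c d x y z w = y ^+ 2 * w - 4%:R * x ^+ 3 + 3%:R * a * x * w ^+ 2 + b * w ^+ 3
    + 2%:R * c * x * z * w - 2%:R^-1 * (2%:R * d * z * w ^+ 2).
Proof. rewrite /dQz /quarticP !derivE !hornerE /=. cring. Qed.
Lemma dQw_E (a b c d x y z w : C) :
  dQw a b c d x y z w = y ^+ 2 * z + 6%:R * a * x * z * w + 3%:R * b * z * w ^+ 2 + c * x * z ^+ 2
    - 2%:R^-1 * (2%:R * d * z ^+ 2 * w + 4%:R * w ^+ 3).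
Proof. rewrite /dQw /quarticP !derivE !hornerE /=. cring. Qed.
Lemma quartic_E (a b c d x y z w : C) :
  quartic a b c d x y z w = y ^+ 2 * z * w - 4%:R * x ^+ 3 * z + 3%:R * a * x * z * w ^+ 2
    + b * z * w ^+ 3 + c * x * z ^+ 2 * w - 2%:R^-1 * (d * z ^+ 2 * w ^+ 2 + w ^+ 4).
Proof. rewrite /quartic /quarticP !hornerE /=. cring. Qed.

Lemma nzn n : (n.+1)%:R != 0 :> C.
Proof. by rewrite pnatr_eq0. Qed.

Lemma h2E : 2%:R^-1 * 2%:R = 1 :> C.
Proof. by rewrite mulVf // nzn. Qed.

Lemma lck1 {k l r p1 q1 k1 : C} : k != 0 -> p1 = q1 ->
  k * (l - r) = k1 * (p1 - q1) -> l = r.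
Proof.
move=> hk h1; rewrite h1 subrr mulr0 => /eqP; rewrite mulf_eq0 (negbTE hk) /=.
by rewrite subr_eq0 => /eqP.
Qed.

Lemma lck2 {k l r p1 q1 k1 p2 q2 k2 : C} : k != 0 -> p1 = q1 -> p2 = q2 ->
  k * (l - r) = k1 * (p1 - q1) + k2 * (p2 - q2) -> l = r.
Proof.
move=> hk h1 h2; rewrite h1 h2 !subrr !mulr0 addr0 => /eqP; rewrite mulf_eq0 (negbTE hk) /=.
by rewrite subr_eq0 => /eqP.
Qed.

Lemma lck3 {k l r p1 q1 k1 p2 q2 k2 p3 q3 k3 : C} : k != 0 -> p1 = q1 -> p2 = q2 -> p3 = q3 ->
  k * (l - r) = k1 * (p1 - q1) + k2 * (p2 - q2) + k3 * (p3 - q3) -> l = r.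
Proof.
move=> hk h1 h2 h3; rewrite h1 h2 h3 !subrr !mulr0 !addr0 => /eqP; rewrite mulf_eq0 (negbTE hk) /=.
by rewrite subr_eq0 => /eqP.
Qed.

Lemma dQz_E' (a b c d x y z w : C) :
  dQz a b c d x y z w = y ^+ 2 * w - 4%:R * x ^+ 3 + 3%:R * a * x * w ^+ 2 + b * w ^+ 3
    + 2%:R * c * x * z * w - d * z * w ^+ 2.
Proof.
rewrite dQz_E; apply: (lck1 (k := 1) (k1 := - (d * z * w ^+ 2)) (oner_neq0 _) h2E); cring.
Qed.

Lemma dQw_E' (a b c d x y z w : C) :
  dQw a b c d x y z w = y ^+ 2 * z + 6%:R * a * x * z * w + 3%:R * b * z * w ^+ 2 + c * x * z ^+ 2
    - d * z ^+ 2 * w - 2%:R * w ^+ 3.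
Proof.
rewrite dQw_E; apply: (lck1 (k := 1) (k1 := - (d * z ^+ 2 * w + 2%:R * w ^+ 3)) (oner_neq0 _) h2E); cring.
Qed.

Lemma quartic_E2 (a b c d x y z w : C) :
  2%:R * quartic a b c d x y z w = 2%:R * (y ^+ 2 * z * w - 4%:R * x ^+ 3 * z + 3%:R * a * x * z * w ^+ 2
    + b * z * w ^+ 3 + c * x * z ^+ 2 * w) - (d * z ^+ 2 * w ^+ 2 + w ^+ 4).
Proof.
rewrite quartic_E; apply: (lck1 (k := 1) (k1 := - (d * z ^+ 2 * w ^+ 2 + w ^+ 4)) (oner_neq0 _) h2E); cring.
Qed.

Lemma mul_eq0P (x y : C) : x * y = 0 -> x = 0 \/ y = 0.
Proof. by move/eqP; rewrite mulf_eq0 => /orP [] /eqP; [left|right]. Qed.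

Lemma exp_eq0P (x : C) n : x ^+ n.+1 = 0 -> x = 0.
Proof. by move/eqP; rewrite expf_eq0 => /andP [_ /eqP]. Qed.

Definition E1 (a c X Z : C) : C := - (12%:R * X ^+ 2 * Z) + 3%:R * a * Z + c * Z ^+ 2.
Definition E2 (a b c d X Z : C) : C := - (4%:R * X ^+ 3) + 3%:R * a * X + b + 2%:R * c * X * Z - d * Z.
Definition E3 (a b c d X Z : C) : C := 6%:R * a * X * Z + 3%:R * b * Z + c * X * Z ^+ 2 - d * Z ^+ 2 - 2%:R.

Lemma reduce_fw (a b c d x y z w : C) : singular_rep a b c d x y z w ->
  ~ is_P0100 x y z w -> ~ is_P0010 x y z w ->
  exists X Z : C, E1 a c X Z = 0 /\ E2 a b c d X Z = 0 /\ E3 a b c d X Z = 0.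
Proof.
case=> nz [_ [hx [hy [hz hw]]]] n1 n2.
rewrite dQx_E in hx; rewrite dQy_E in hy; rewrite dQz_E' in hz; rewrite dQw_E' in hw.
have w0 : w != 0.
  apply/eqP => w0; subst w.
  have x0 : x = 0.
    apply: (@exp_eq0P x 2); apply: (lck1 (k := 4%:R) (k1 := -1) (nzn 3) hz); cring.
  subst x.
  have : y ^+ 2 * z = 0 by apply: (lck1 (k := 1) (k1 := 1) (oner_neq0 _) hw); cring.
  case/mul_eq0P => [/exp_eq0P y0|z0].
    by apply: n2.
  by apply: n1.
have z0 : z != 0.
  apply/eqP => z0; subst z.
  have : w ^+ 3 = 0 by apply: (lck1 (k := 2%:R) (k1 := -1) (nzn 1) hw); cring.
  by move/exp_eq0P; apply/eqP.
have y0 : y = 0.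
  case/mul_eq0P: hy => [/mul_eq0P [/mul_eq0P [h|//]|h]|h].
  - by move: (nzn 1); rewrite h eqxx.
  - by move: z0; rewrite h eqxx.
  - by move: w0; rewrite h eqxx.
subst y.
move: hx hz hw.
have [X [Z [-> ->]]] : exists X Z, x = X * w /\ z = Z * w.
  by exists (x / w), (z / w); rewrite !divfK.
move=> hx hz hw.
have w3 : w ^+ 3 != 0 by rewrite expf_neq0.
exists X, Z; split; [|split].
- apply: (lck1 (k := w ^+ 3) (k1 := 1) w3 hx); rewrite /E1; cring.
- apply: (lck1 (k := w ^+ 3) (k1 := 1) w3 hz); rewrite /E2; cring.
- apply: (lck1 (k := w ^+ 3) (k1 := 1) w3 hw); rewrite /E3; cring.
Qed.

Lemma reduce_bw (a b c d X Z : C) :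
  E1 a c X Z = 0 -> E2 a b c d X Z = 0 -> E3 a b c d X Z = 0 ->
  singular_rep a b c d X 0 Z 1 /\ ~ is_P0100 X 0 Z 1 /\ ~ is_P0010 X 0 Z 1.
Proof.
move=> h1 h2 h3.
have n1 : ~ ((1 : C) = 0) by move/eqP; rewrite oner_eq0.
split; last by split; case=> _ [_ /n1].
split; first by case=> _ [_ [_ /n1]].
split.
  have : 2%:R * quartic a b c d X 0 Z 1 = 0.
    rewrite quartic_E2.
    by apply: (lck3 (k := 2%:R) (k1 := X) (k2 := Z) (k3 := 1) (nzn 1) h1 h2 h3); rewrite /E1 /E2 /E3; cring.
  by case/mul_eq0P => // /eqP; rewrite (negbTE (nzn 1)).
split; first by rewrite dQx_E; apply: (lck1 (k := 1) (k1 := 1) (oner_neq0 _) h1); rewrite /E1; cring.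
split; first by rewrite dQy_E; cring.
split; first by rewrite dQz_E'; apply: (lck1 (k := 1) (k1 := 1) (oner_neq0 _) h2); rewrite /E2; cring.
by rewrite dQw_E'; apply: (lck1 (k := 1) (k1 := 1) (oner_neq0 _) h3); rewrite /E3; cring.
Qed.


Lemma root2 (A B : C) : exists x : C, x ^+ 2 + A * x + B = 0.
Proof.
have [x hx] := @solve_monicpoly C 2 (fun i => if i == 0%N then - B else - A) isT.
exists x; move: hx; rewrite !big_ord_recr big_ord0 /= => hx.
apply: (lck1 (k := 1) (k1 := 1) (oner_neq0 _) hx); cring.
Qed.

Lemma root3 (A B D : C) : exists x : C, x ^+ 3 + A * x ^+ 2 + B * x + D = 0.
Proof.
have [x hx] := @solve_monicpoly C 3
  (fun i => if i == 0%N then - D else if i == 1%N then - B else - A) isT.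
exists x; move: hx; rewrite !big_ord_recr big_ord0 /= => hx.
apply: (lck1 (k := 1) (k1 := 1) (oner_neq0 _) hx); cring.
Qed.

Lemma cubic_vieta (A B D : C) : exists r1 r2 r3 : C,
  r1 + r2 + r3 = - A /\ r1 * r2 + r1 * r3 + r2 * r3 = B /\ r1 * r2 * r3 = - D.
Proof.
have [r1 h1] := root3 A B D.
have [r2 h2] := root2 (A + r1) (B + r1 * (A + r1)).
exists r1, r2, (- A - r1 - r2); split; first by cring.
split.
  by apply: (lck1 (k := 1) (k1 := -1) (oner_neq0 _) h2); cring.
by apply: (lck2 (k := 1) (k1 := - r1) (k2 := 1) (oner_neq0 _) h2 h1); cring.
Qed.

Definition P3 (a b c d X : C) : C :=
  20%:R * c * X ^+ 3 - 12%:R * d * X ^+ 2 - 3%:R * a * c * X + (b * c + 3%:R * a * d).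

Definition Qf (a b c d X : C) : C :=
  (12%:R * X ^+ 2 - 3%:R * a) * (6%:R * a * c * X + 3%:R * b * c + c * X * (12%:R * X ^+ 2 - 3%:R * a)
     - d * (12%:R * X ^+ 2 - 3%:R * a)) - 2%:R * c ^+ 2.

Lemma P3_vieta (a b c d : C) : c != 0 -> exists r1 r2 r3 : C,
  20%:R * c * (r1 + r2 + r3) = 12%:R * d /\
  20%:R * c * (r1 * r2 + r1 * r3 + r2 * r3) = - (3%:R * a * c) /\
  20%:R * c * (r1 * r2 * r3) = - (b * c + 3%:R * a * d).
Proof.
move=> hc.
have hL : 20%:R * c != 0 by rewrite mulf_neq0 // nzn.
have hinv : (20%:R * c) * (20%:R * c)^-1 = 1 by rewrite mulfV.
have [r1 [r2 [r3 [h1 [h2 h3]]]]] := cubic_vieta (- (12%:R * d) * (20%:R * c)^-1)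
  (- (3%:R * a * c) * (20%:R * c)^-1) ((b * c + 3%:R * a * d) * (20%:R * c)^-1).
exists r1, r2, r3; split; [|split].
- by apply: (lck2 (k := 1) (k1 := 20%:R * c) (k2 := 12%:R * d) (oner_neq0 _) h1 hinv); cring.
- by apply: (lck2 (k := 1) (k1 := 20%:R * c) (k2 := - (3%:R * a * c)) (oner_neq0 _) h2 hinv); cring.
- by apply: (lck2 (k := 1) (k1 := 20%:R * c) (k2 := - (b * c + 3%:R * a * d)) (oner_neq0 _) h3 hinv); cring.
Qed.

Lemma sys_cnz (a b c d : C) : c != 0 ->
  (exists X Z, E1 a c X Z = 0 /\ E2 a b c d X Z = 0 /\ E3 a b c d X Z = 0) <->
  (exists X, P3 a b c d X = 0 /\ Qf a b c d X = 0).
Proof.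
move=> hc; split.
- case=> X [Z [h1 [h2 h3]]].
  have Z0 : Z != 0.
    apply/eqP => Z0; subst Z.
    have : (2%:R : C) = 0 by apply: (lck1 (k := 1) (k1 := -1) (oner_neq0 _) h3); rewrite /E3; cring.
    by move/eqP; rewrite (negbTE (nzn 1)).
  have hT : c * Z = 12%:R * X ^+ 2 - 3%:R * a.
    by apply: (lck1 (k := Z) (k1 := 1) Z0 h1); rewrite /E1; cring.
  exists X; split.
    by apply: (lck2 (k := 1) (k1 := c) (k2 := - (2%:R * c * X - d)) (oner_neq0 _) h2 hT);
      rewrite /P3 /E2; cring.
  apply: (lck2 (k := 1) (k1 := c ^+ 2)
    (k2 := - (6%:R * a * c * X + 3%:R * b * c + (c * X - d) * (12%:R * X ^+ 2 - 3%:R * a + c * Z)))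
    (oner_neq0 _) h3 hT).
  by rewrite /Qf /E3; cring.
- case=> X [hP hQ].
  exists X, ((12%:R * X ^+ 2 - 3%:R * a) / c).
  have hT : c * ((12%:R * X ^+ 2 - 3%:R * a) / c) = 12%:R * X ^+ 2 - 3%:R * a.
    by rewrite mulrC divfK.
  split; [|split].
  + by apply: (lck1 (k := 1) (k1 := (12%:R * X ^+ 2 - 3%:R * a) / c) (oner_neq0 _) hT); rewrite /E1; cring.
  + by apply: (lck2 (k := c) (k1 := 1) (k2 := 2%:R * c * X - d) hc hP hT); rewrite /P3 /E2; cring.
  + apply: (lck2 (k := c ^+ 2) (k1 := 1)
      (k2 := 6%:R * a * c * X + 3%:R * b * c + (c * X - d) *
        (12%:R * X ^+ 2 - 3%:R * a + c * ((12%:R * X ^+ 2 - 3%:R * a) / c)))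
      (expf_neq0 _ hc) hQ hT).
    by rewrite /Qf /E3; cring.
Qed.

Definition D4s (a b c d : C) : C :=
  - (2%:R ^+ 5 * 3%:R ^+ 6) * a^+6 * b * c^+3
  + (2%:R ^+ 6 * 3%:R ^+ 6) * a^+3 * b^+3 * c^+3
  - (2%:R ^+ 5 * 3%:R ^+ 6) * b^+5 * c^+3
  - (2%:R ^+ 4 * 3%:R ^+ 5) * a^+5 * c^+4
  + (2%:R ^+ 4 * 3%:R ^+ 5 * 5%:R ^+ 2) * a^+2 * b^+2 * c^+4
  + (2%:R * 3%:R ^+ 3 * 5%:R ^+ 4) * a * b * c^+5
  + (5%:R ^+ 5) * c^+6
  - (2%:R ^+ 4 * 3%:R ^+ 7) * a^+7 * c^+2 * d
  + (2%:R ^+ 5 * 3%:R ^+ 7) * a^+4 * b^+2 * c^+2 * d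
  - (2%:R ^+ 4 * 3%:R ^+ 7) * a * b^+4 * c^+2 * d
  + (2%:R ^+ 3 * 3%:R ^+ 5 * 5%:R * 19%:R) * a^+3 * b * c^+3 * d
  + (2%:R ^+ 3 * 3%:R ^+ 5 * 5%:R ^+ 2) * b^+3 * c^+3 * d
  + (3%:R ^+ 3 * 5%:R ^+ 3 * 11%:R) * a^+2 * c^+4 * d
  + (2%:R ^+ 3 * 3%:R ^+ 5 * 37%:R) * a^+4 * c^+2 * d^+2
  + (2%:R ^+ 3 * 3%:R ^+ 5 * 5%:R * 7%:R) * a * b^+2 * c^+2 * d^+2
  - (2%:R ^+ 3 * 3%:R ^+ 3 * 5%:R ^+ 3) * b * c^+3 * d^+2
  + (2%:R ^+ 4 * 3%:R ^+ 6) * a^+6 * d^+3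
  - (2%:R ^+ 5 * 3%:R ^+ 6) * a^+3 * b^+2 * d^+3
  + (2%:R ^+ 4 * 3%:R ^+ 6) * b^+4 * d^+3
  - (2%:R ^+ 6 * 3%:R ^+ 6) * a^+2 * b * c * d^+3
  - (2%:R ^+ 3 * 3%:R ^+ 5 * 5%:R ^+ 2) * a * c^+2 * d^+3
  - (2%:R ^+ 5 * 3%:R ^+ 6) * a^+3 * d^+4
  - (2%:R ^+ 5 * 3%:R ^+ 6) * b^+2 * d^+4
  + (2%:R ^+ 4 * 3%:R ^+ 6) * d^+5.

Lemma D4_D4s (a b c d : C) : D4 a b c d = D4s a b c d.
Proof. rewrite /D4 /D4s. cg. Qed.

Lemma bigid (u1 u2 u3 c : C) :
  3125%:R * (Qf (- (60%:R * (u1 * u2 + u1 * u3 + u2 * u3)))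
                (- (540%:R * (u1 * u2 * u3)) + 900%:R * (u1 + u2 + u3) * (u1 * u2 + u1 * u3 + u2 * u3))
                c (5%:R * c * (u1 + u2 + u3)) (3%:R * u1) *
             Qf (- (60%:R * (u1 * u2 + u1 * u3 + u2 * u3)))
                (- (540%:R * (u1 * u2 * u3)) + 900%:R * (u1 + u2 + u3) * (u1 * u2 + u1 * u3 + u2 * u3))
                c (5%:R * c * (u1 + u2 + u3)) (3%:R * u2) *
             Qf (- (60%:R * (u1 * u2 + u1 * u3 + u2 * u3)))
                (- (540%:R * (u1 * u2 * u3)) + 900%:R * (u1 + u2 + u3) * (u1 * u2 + u1 * u3 + u2 * u3))
                c (5%:R * c * (u1 + u2 + u3)) (3%:R * u3))
  + 8%:R * D4s (- (60%:R * (u1 * u2 + u1 * u3 + u2 * u3)))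
                (- (540%:R * (u1 * u2 * u3)) + 900%:R * (u1 + u2 + u3) * (u1 * u2 + u1 * u3 + u2 * u3))
                c (5%:R * c * (u1 + u2 + u3)) = 0.
Proof. rewrite /Qf /D4s. Time cring. Qed.


Lemma core_cnz (a b c d : C) : c != 0 ->
  (exists X, P3 a b c d X = 0 /\ Qf a b c d X = 0) <-> D4 a b c d = 0.
Proof.
move=> hc.
have [r1 [r2 [r3 [V1 [V2 V3]]]]] := P3_vieta a b c d hc.
have fact : forall X, P3 a b c d X = 20%:R * c * ((X - r1) * (X - r2) * (X - r3)).
  move=> X.
  by apply: (lck3 (k := 1) (k1 := X ^+ 2) (k2 := - X) (k3 := 1) (oner_neq0 _) V1 V2 V3);
    rewrite /P3; cring.
have key : 3125%:R * (Qf a b c d r1 * Qf a b c d r2 * Qf a b c d r3) + 8%:R * D4s a b c d = 0.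
  move: V1 V2 V3.
  have [u1 ->] : exists u, r1 = 3%:R * u by exists (r1 / 3%:R); rewrite mulrC divfK // nzn.
  have [u2 ->] : exists u, r2 = 3%:R * u by exists (r2 / 3%:R); rewrite mulrC divfK // nzn.
  have [u3 ->] : exists u, r3 = 3%:R * u by exists (r3 / 3%:R); rewrite mulrC divfK // nzn.
  move=> V1 V2 V3.
  have h3c : 3%:R * c != 0 by rewrite mulf_neq0 // nzn.
  have ha : a = - (60%:R * (u1 * u2 + u1 * u3 + u2 * u3)).
    by apply: (lck1 (k := 3%:R * c) (k1 := 1) h3c V2); cring.
  have hd : d = 5%:R * c * (u1 + u2 + u3).
    by apply: (lck1 (k := 12%:R) (k1 := -1) (nzn 11) V1); cring.
  rewrite ha hd in V3.
  have hb : b = - (540%:R * (u1 * u2 * u3)) + 900%:R * (u1 + u2 + u3) * (u1 * u2 + u1 * u3 + u2 * u3).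
    by apply: (lck1 (k := c) (k1 := 1) hc V3); cring.
  by rewrite hb ha hd; exact: bigid.
have n3125 : (3125%:R : C) != 0 by rewrite nzn.
rewrite D4_D4s; split.
- case=> X [hP hQ].
  rewrite fact in hP.
  have hX : X = r1 \/ X = r2 \/ X = r3.
    case/mul_eq0P: hP => [/eqP|].
      by rewrite mulf_eq0 (negbTE (nzn 19)) (negbTE hc).
    case/mul_eq0P => [/mul_eq0P [] /subr0_eq|/subr0_eq]; by [left|right;left|right;right].
  have hprod : Qf a b c d r1 * Qf a b c d r2 * Qf a b c d r3 = 0.
    by case: hX => [hX|[hX|hX]]; rewrite -hX hQ; cring.
  have : 8%:R * D4s a b c d = 0.
    by apply: (lck1 (k := 1) (k1 := 1) (oner_neq0 _) key); rewrite hprod; cring.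
  by case/mul_eq0P => // /eqP; rewrite (negbTE (nzn 7)).
- move=> hD.
  have : 3125%:R * (Qf a b c d r1 * Qf a b c d r2 * Qf a b c d r3) = 0.
    by apply: (lck1 (k := 1) (k1 := 1) (oner_neq0 _) key); rewrite hD; cring.
  case/mul_eq0P => [/eqP|]; first by rewrite (negbTE n3125).
  case/mul_eq0P => [/mul_eq0P []|] hq.
  + by exists r1; split => //; rewrite fact subrr; cring.
  + by exists r2; split => //; rewrite fact subrr; cring.
  + by exists r3; split => //; rewrite fact subrr; cring.
Qed.

Lemma sys_c0 (a b d : C) : d != 0 ->
  (exists X Z, E1 a 0 X Z = 0 /\ E2 a b 0 d X Z = 0 /\ E3 a b 0 d X Z = 0) <->
  (exists X, 4%:R * X ^+ 2 = a /\ (8%:R * X ^+ 3 + b) ^+ 2 = d).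
Proof.
move=> hd; split.
- case=> X [Z [h1 [h2 h3]]].
  have Z0 : Z != 0.
    apply/eqP => Z0; subst Z.
    have : (2%:R : C) = 0 by apply: (lck1 (k := 1) (k1 := -1) (oner_neq0 _) h3); rewrite /E3; cring.
    by move/eqP; rewrite (negbTE (nzn 1)).
  have ha : 4%:R * X ^+ 2 = a.
    by apply: (lck1 (k := 3%:R * Z) (k1 := -1) (mulf_neq0 (nzn 2) Z0) h1); rewrite /E1; cring.
  have hW : d * Z = 8%:R * X ^+ 3 + b.
    by apply: (lck2 (k := 1) (k1 := -1) (k2 := - (3%:R * X)) (oner_neq0 _) h2 ha); rewrite /E2; cring.
  exists X; split => //.
  apply: (lck3 (k := 2%:R) (k1 := d) (k2 := d * Z - 2%:R * (8%:R * X ^+ 3 + b))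
    (k3 := 6%:R * X * (d * Z)) (nzn 1) h3 hW ha).
  by rewrite /E3; cring.
- case=> X [ha hV].
  exists X, ((8%:R * X ^+ 3 + b) / d).
  have hW : d * ((8%:R * X ^+ 3 + b) / d) = 8%:R * X ^+ 3 + b by rewrite mulrC divfK.
  split; [|split].
  + by apply: (lck1 (k := 1) (k1 := - (3%:R * ((8%:R * X ^+ 3 + b) / d))) (oner_neq0 _) ha);
      rewrite /E1; cring.
  + by apply: (lck2 (k := 1) (k1 := -1) (k2 := - (3%:R * X)) (oner_neq0 _) hW ha); rewrite /E2; cring.
  + apply: (lck3 (k := d) (k1 := 2%:R)
      (k2 := - (d * ((8%:R * X ^+ 3 + b) / d) - 2%:R * (8%:R * X ^+ 3 + b)))
      (k3 := - (6%:R * X * (d * ((8%:R * X ^+ 3 + b) / d)))) hd hV hW ha).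
    by rewrite /E3; cring.
Qed.

Lemma c0id (e b d : C) :
  D4s (4%:R * e ^+ 2) b 0 d =
  (2%:R ^+ 4 * 3%:R ^+ 6) * d ^+ 3 * (((8%:R * e ^+ 3 + b) ^+ 2 - d) * ((b - 8%:R * e ^+ 3) ^+ 2 - d)).
Proof. rewrite /D4s; cring. Qed.

Lemma core_c0 (a b d : C) : d != 0 ->
  (exists X, 4%:R * X ^+ 2 = a /\ (8%:R * X ^+ 3 + b) ^+ 2 = d) <-> D4 a b 0 d = 0.
Proof.
move=> hd.
have [e he] : exists e : C, 4%:R * e ^+ 2 = a.
  exists (sqrtC a / 2%:R).
  by apply: (lck2 (k := 1) (k1 := 4%:R * (2%:R^-1) ^+ 2) (k2 := a * (2%:R * 2%:R^-1 + 1))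
    (oner_neq0 _) (sqrtCK a) h2E); cring.
have hK : (2%:R ^+ 4 * 3%:R ^+ 6) * d ^+ 3 != 0 :> C.
  by rewrite !mulf_neq0 ?expf_neq0 ?nzn.
rewrite D4_D4s -he c0id; split.
- case=> X [hX hV].
  have : (X - e) * (X + e) = 0.
    by apply: (lck1 (k := 4%:R) (k1 := 1) (nzn 3) hX); cring.
  case/mul_eq0P => [/subr0_eq hXe|hXe].
    subst X.
    have -> : (8%:R * e ^+ 3 + b) ^+ 2 - d = 0.
      by apply: (lck1 (k := 1) (k1 := 1) (oner_neq0 _) hV); cring.
    by rewrite mul0r mulr0.
  have hX' : X = - e by apply: (lck1 (k := 1) (k1 := 1) (oner_neq0 _) hXe); cring.
  subst X.
  have -> : (b - 8%:R * e ^+ 3) ^+ 2 - d = 0.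
    by apply: (lck1 (k := 1) (k1 := 1) (oner_neq0 _) hV); cring.
  by rewrite mulr0 mulr0.
- case/mul_eq0P => [/eqP|]; first by rewrite (negbTE hK).
  case/mul_eq0P => hF.
  + exists e; split => //.
    by apply: (lck1 (k := 1) (k1 := 1) (oner_neq0 _) hF); cring.
  + exists (- e); split; first by cring.
    by apply: (lck1 (k := 1) (k1 := 1) (oner_neq0 _) hF); cring.
Qed.
End Main.
Arguments E1 {C}. Arguments E2 {C}. Arguments E3 {C}.
Arguments sys_c0 {C}. Arguments core_c0 {C}. Arguments sys_cnz {C}. Arguments core_cnz {C}.
Arguments reduce_fw {C}. Arguments reduce_bw {C}.

Theorem mainTheorem4 (C : numClosedFieldType) (a b c d : C)
  (hcd : c != 0 \/ d != 0) :
  (exists x y z w : C,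
      singular_rep a b c d x y z w /\
      ~ is_P0100 x y z w /\ ~ is_P0010 x y z w)
  <-> D4 a b c d = 0.
Proof.
have sysD : (exists X Z, E1 a c X Z = 0 /\ E2 a b c d X Z = 0 /\ E3 a b c d X Z = 0)
    <-> D4 a b c d = 0.
  case: (eqVneq c 0) => [c0|cn0].
    subst c.
    have dn0 : d != 0 by case: hcd => //; rewrite eqxx.
    exact: (iff_trans (sys_c0 a b d dn0) (core_c0 a b d dn0)).
  exact: (iff_trans (sys_cnz a b c d cn0) (core_cnz a b c d cn0)).
split.
- case=> x [y [z [w [hs [n1 n2]]]]].
  apply/sysD; exact: reduce_fw hs n1 n2.
- move/sysD => [X [Z [h1 [h2 h3]]]].
  exists X, 0, Z, 1; exact: reduce_bw.
Qed.
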